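(* Let $\pi\colon(\mathcal{G},R)\to(\mathcal{H},R)$ be a surjection of right Hopf algebroids over $R$ with left Hopf kernel $B$, with $\mathcal{G}_\triangleleft$ flat over $R$, and suppose that $\mathcal{G}B^+=\ker\pi$, or equivalently that $B\subseteq\mathcal{G}$ is a Hopf-Galois extension. Then $\overline{\mathcal{G}}=\mathcal{G}/\mathcal{G}B^+\cong\mathcal{H}$ as left $\mathcal{G}$-module corings.
   Context: $\Bbbk$ a commutative ring, $R$ a $\Bbbk$-algebra. Left bialgebroid $(\mathcal{G},R,s,t,\Delta,\varepsilon)$: $\Bbbk$-algebra, algebra map $s$ and anti-map $t\colon R\to\mathcal{G}$ with commuting images, $r\triangleright g\triangleleft r'=s(r)t(r')g$, $r\blacktriangleright g\blacktriangleleft r'=gt(r)s(r')$, coassociative counital $R$-bimodule map $\Delta\colon\mathcal{G}\to\mathcal{G}_\triangleleft\otimes_R{}_\triangleright\mathcal{G}$, $g\mapsto g_{(1)}\otimes g_{(2)}$, valued in the Takeuchi subspace and multiplicative, counit with $\varepsilon(1)=1$, $\varepsilon(gg')=\varepsilon(g\blacktriangleleft\varepsilon(g'))=\varepsilon(\varepsilon(g')\blacktriangleright g)$. Right Hopf: $\mathcal{G}_\blacktriangleleft\otimes_R{}_\triangleright\mathcal{G}\to\mathcal{G}_\triangleleft\otimes_R{}_\triangleright\mathcal{G}$, $g\otimes g'\mapsto g_{(1)}g'\otimes g_{(2)}$ bijective. A surjection of bialgebroids over $R$ is a surjective algebra map $\pi$ intertwining $s,t,\Delta,\varepsilon$. Left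 Hopf kernel $B=\{g:g_{(1)}\otimes_R\pi(g_{(2)})=g\otimes_R1\}$, $B^+=B\cap\ker\varepsilon$. $B\subseteq\mathcal{G}$ is Hopf-Galois if $\mathcal{G}\otimes_B\mathcal{G}\to\mathcal{G}\otimes_R\mathcal{H}$, $g\otimes g'\mapsto g_{(1)}g'\otimes\pi(g_{(2)})$ is bijective. $\overline{\mathcal{G}}=\mathcal{G}/\mathcal{G}B^+$, with projection $\wp$, is a left $\mathcal{G}$-module $R$-coring via $g\cdot\wp(g')=\wp(gg')$, $\Delta(\wp(g))=\wp(g_{(1)})\otimes_R\wp(g_{(2)})$, $\varepsilon(\wp(g))=\varepsilon(g)$ and $R$-bimodule structure induced by $\triangleright,\triangleleft$; $\mathcal{H}$ is a left $\mathcal{G}$-module $R$-coring via $g\cdot h=\pi(g)h$ and its own coproduct and counit. *)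

(* Defs.v *)
From HB Require Import structures.
From mathcomp Require Import all_boot all_order all_algebra.
Set Implicit Arguments. Unset Strict Implicit. Unset Printing Implicit Defensive.
Import GRing.Theory.
Local Open Scope ring_scope.

(* Tensor products of abelian groups over a ring, presented by generators    *)
(* and relations.  An element of M (x)_R N is represented by a finite formal *)
(* sum (a sequence) of pairs (m, n); two representatives denote the same     *)
(* tensor iff they are related by the smallest congruence of the free        *)
(* commutative monoid on pairs generated by the bilinearity / balancing      *)
(* relators.  (The quotient is an abelian group, and is exactly M (x)_R N.)  *)

Inductive fcong (T : Type) (rel : seq T -> seq T -> Prop) : seq T -> seq T -> Prop :=
| fc_base a b : rel a b -> fcong rel a b
| fc_refl a : fcong rel a a
| fc_sym a b : fcong rel a b -> fcong rel b a
| fc_trans a b c : fcong rel a b -> fcong rel b c -> fcong rel a c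
| fc_cat a a' b b' : fcong rel a a' -> fcong rel b b' -> fcong rel (a ++ b) (a' ++ b')
| fc_swap a b : fcong rel (a ++ b) (b ++ a).

(* relators of a two-fold tensor product; [bal m n m' n'] means that the     *)
(* elementary tensors m (x) n and m' (x) n' are identified (balancing).      *)
Inductive tens2_rel (M N : zmodType) (bal : M -> N -> M -> N -> Prop) :
  seq (M * N) -> seq (M * N) -> Prop :=
| t2_addl m m' n : tens2_rel bal [:: (m + m', n)] [:: (m, n); (m', n)]
| t2_addr m n n' : tens2_rel bal [:: (m, n + n')] [:: (m, n); (m, n')]
| t2_zerol n : tens2_rel bal [:: (0, n)] [::]
| t2_zeror m : tens2_rel bal [:: (m, 0)] [::]
| t2_bal m n m' n' : bal m n m' n' -> tens2_rel bal [:: (m, n)] [:: (m', n')].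

Definition tens2_eq (M N : zmodType) (bal : M -> N -> M -> N -> Prop) :=
  fcong (tens2_rel bal).

(* balancing for M_R (x)_R _R N, with right action [ra] and left action [la]:*)
(*   (m . r) (x) n  =  m (x) (r . n)                                         *)
Definition balR (A : Type) (M N : zmodType) (ra : M -> A -> M) (la : A -> N -> N)
  (m : M) (n : N) (m' : M) (n' : N) : Prop :=
  exists r : A, m = ra m' r /\ n' = la r n.

Inductive tens3_rel (M N P : zmodType) (A : Type)
  (ra1 : M -> A -> M) (la2 : A -> N -> N) (ra2 : N -> A -> N) (la3 : A -> P -> P) :
  seq (M * N * P) -> seq (M * N * P) -> Prop :=
| t3_add1 m m' n p : tens3_rel ra1 la2 ra2 la3 [:: (m + m', n, p)] [:: (m, n, p); (m', n, p)]
| t3_add2 m n n' p : tens3_rel ra1 la2 ra2 la3 [:: (m, n + n', p)] [:: (m, n, p); (m, n', p)]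
| t3_add3 m n p p' : tens3_rel ra1 la2 ra2 la3 [:: (m, n, p + p')] [:: (m, n, p); (m, n, p')]
| t3_zero1 n p : tens3_rel ra1 la2 ra2 la3 [:: (0, n, p)] [::]
| t3_zero2 m p : tens3_rel ra1 la2 ra2 la3 [:: (m, 0, p)] [::]
| t3_zero3 m n : tens3_rel ra1 la2 ra2 la3 [:: (m, n, 0)] [::]
| t3_bal12 m n p r : tens3_rel ra1 la2 ra2 la3 [:: (ra1 m r, n, p)] [:: (m, la2 r n, p)]
| t3_bal23 m n p r : tens3_rel ra1 la2 ra2 la3 [:: (m, ra2 n r, p)] [:: (m, n, la3 r p)].

Definition tens3_eq (M N P : zmodType) (A : Type) ra1 la2 ra2 la3 :=
  fcong (@tens3_rel M N P A ra1 la2 ra2 la3).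

(* a map on representatives induces a bijection between the tensor products *)
(* with equivalences [eqA] and [eqB] (well defined, injective, surjective)   *)
Definition tens_bij (A B : Type) (eqA : seq A -> seq A -> Prop)
  (eqB : seq B -> seq B -> Prop) (f : seq A -> seq B) : Prop :=
  (forall u v, eqB (f u) (f v) <-> eqA u v) /\ (forall w, exists u, eqB (f u) w).

Section Bialgebroid.
Variables (k : comPzRingType) (R G : algType k).
Variables (s t : R -> G) (D : G -> seq (G * G)) (e : G -> R).

(* G_<| (x)_R _|>G :  g <| r = t(r) g,  r |> g = s(r) g *)
Definition teqG : seq (G * G) -> seq (G * G) -> Prop :=
  tens2_eq (balR (fun g r => t r * g) (fun r g => s r * g)).

Definition teqG3 : seq (G * G * G) -> seq (G * G * G) -> Prop :=
  tens3_eq (fun g r => t r * g) (fun r g => s r * g)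
           (fun g r => t r * g) (fun r g => s r * g).

(* G_<| (x)_R _|>G, source of the right Hopf map:  g <| r = g s(r) *)
Definition teqG_bl : seq (G * G) -> seq (G * G) -> Prop :=
  tens2_eq (balR (fun g r => g * s r) (fun r g => s r * g)).

Definition is_left_bialgebroid : Prop :=
  [/\ (forall (c : k) x y, s (c *: x + y) = c *: s x + s y),
      s 1 = 1 & (forall x y, s (x * y) = s x * s y)] /\
  [/\ (forall (c : k) x y, t (c *: x + y) = c *: t x + t y),
      t 1 = 1 & (forall x y, t (x * y) = t y * t x)] /\
  (forall r r', s r * t r' = t r' * s r) /\
  (forall (c : k) x y, teqG (D (c *: x + y))
      ([seq (c *: p.1, p.2) | p <- D x] ++ D y)) /\
  (forall r r' g, teqG (D (s r * t r' * g)) [seq (s r * p.1, t r' * p.2) | p <- D g]) /\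
  (forall g, teqG3 (flatten [seq [seq (q.1, q.2, p.2) | q <- D p.1] | p <- D g])
                   (flatten [seq [seq (p.1, q.1, q.2) | q <- D p.2] | p <- D g])) /\
  (forall g, \sum_(p <- D g) s (e p.1) * p.2 = g) /\
  (forall g, \sum_(p <- D g) t (e p.2) * p.1 = g) /\
  (* D takes values in the Takeuchi subspace *)
  (forall g r, teqG [seq (p.1 * t r, p.2) | p <- D g] [seq (p.1, p.2 * s r) | p <- D g]) /\
  (forall g g', teqG (D (g * g')) [seq (p.1 * q.1, p.2 * q.2) | p <- D g, q <- D g']) /\
  teqG (D 1) [:: (1, 1)] /\
  (forall (c : k) x y, e (c *: x + y) = c *: e x + e y) /\
  (forall r r' g, e (s r * t r' * g) = r * e g * r') /\
  e 1 = 1 /\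
  (forall g g', e (g * g') = e (g * s (e g')) /\ e (g * g') = e (g * t (e g'))).

Definition right_hopf_map (u : seq (G * G)) : seq (G * G) :=
  flatten [seq [seq (p.1 * q.2, p.2) | p <- D q.1] | q <- u].

Definition is_right_hopf_algebroid : Prop :=
  is_left_bialgebroid /\ tens_bij teqG_bl teqG right_hopf_map.

Definition flat_G_tri : Prop :=
  forall (N N' : lmodType R) (f : N -> N'),
    (forall (c : R) x y, f (c *: x + y) = c *: f x + f y) ->
    injective f ->
    forall u : seq (G * N),
      tens2_eq (balR (fun g r => t r * g) (fun r n => r *: n))
               [seq (p.1, f p.2) | p <- u] [::] ->
      tens2_eq (balR (fun g r => t r * g) (fun r n => r *: n)) u [::].

End Bialgebroid.

Section Surjection.
Variables (k : comPzRingType) (R G H : algType k).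
Variables (sG tG : R -> G) (DG : G -> seq (G * G)) (eG : G -> R).
Variables (sH tH : R -> H) (DH : H -> seq (H * H)) (eH : H -> R).
Variable (pi : G -> H).

Definition is_bialgebroid_surjection : Prop :=
  (forall (c : k) x y, pi (c *: x + y) = c *: pi x + pi y) /\
  pi 1 = 1 /\ (forall x y, pi (x * y) = pi x * pi y) /\
  (forall h, exists g, pi g = h) /\
  (forall r, pi (sG r) = sH r) /\ (forall r, pi (tG r) = tH r) /\
  (forall g, teqG sH tH (DH (pi g)) [seq (pi p.1, pi p.2) | p <- DG g]) /\
  (forall g, eH (pi g) = eG g).

Definition teqGH : seq (G * H) -> seq (G * H) -> Prop :=
  tens2_eq (balR (fun g r => tG r * g) (fun r h => sH r * h)).

Definition hopf_kernel (g : G) : Prop :=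
  teqGH [seq (p.1, pi p.2) | p <- DG g] [:: (g, 1)].

Definition hopf_kernel_plus (g : G) : Prop := hopf_kernel g /\ eG g = 0.

Definition in_GBplus (x : G) : Prop :=
  exists gs : seq (G * G),
    (forall p, p \in gs -> hopf_kernel_plus p.2) /\
    x = \sum_(p <- gs) p.1 * p.2.

Definition teqGBG : seq (G * G) -> seq (G * G) -> Prop :=
  tens2_eq (fun m n m' n' => exists b, hopf_kernel b /\ m = m' * b /\ n' = b * n).

Definition galois_map (u : seq (G * G)) : seq (G * H) :=
  flatten [seq [seq (p.1 * q.2, pi p.2) | p <- DG q.1] | q <- u].

Definition is_hopf_galois : Prop := tens_bij teqGBG teqGH galois_map.

(* Gbar = G / G B^+ is isomorphic to H as left G-module R-corings.  A map    *)
(* Gbar -> H is given by a map phi : G -> H vanishing on G B^+ (phi = phibar *)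
(* o wp); phibar is bijective iff phi is onto and phi x = phi y implies      *)
(* x - y in G B^+.                                                           *)
Definition Gbar_iso_H (phi : G -> H) : Prop :=
  (forall (c : k) x y, phi (c *: x + y) = c *: phi x + phi y) /\
  (forall x, in_GBplus x -> phi x = 0) /\
  (forall x y, phi x = phi y -> in_GBplus (x - y)) /\
  (forall h, exists g, phi g = h) /\
  (forall g x, phi (g * x) = pi g * phi x) /\
  (forall r r' x, phi (sG r * tG r' * x) = sH r * tH r' * phi x) /\
  (forall g, teqG sH tH (DH (phi g)) [seq (phi p.1, phi p.2) | p <- DG g]) /\
  (forall g, eH (phi g) = eG g).

End Surjection.

(* Main.v *)
Require Import Defs.
From HB Require Import structures.
From mathcomp Require Import all_boot all_order all_algebra.
Set Implicit Arguments. Unset Strict Implicit. Unset Printing Implicit Defensive.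
Import GRing.Theory.
Local Open Scope ring_scope.

Lemma fcong_F (A B : Type) (rel : seq A -> seq A -> Prop) (rel' : seq B -> seq B -> Prop)
  (F : seq A -> seq B) :
  (forall a b, fcong rel' (F (a ++ b)) (F a ++ F b)) ->
  (forall a b, rel a b -> fcong rel' (F a) (F b)) ->
  forall a b, fcong rel a b -> fcong rel' (F a) (F b).
Proof.
move=> hc hb a b; elim => {a b}.
- by move=> a b /hb.
- by move=> a; apply: fc_refl.
- by move=> a b _ h; apply: fc_sym.
- by move=> a b c _ h1 _ h2; apply: fc_trans h1 h2.
- move=> a a' b b' _ h1 _ h2; apply: fc_trans (hc _ _) _.
  apply: fc_trans _ (fc_sym (hc _ _)); exact: fc_cat.
- move=> a b; apply: fc_trans (hc _ _) _.
  apply: fc_trans (fc_swap _ _ _) (fc_sym (hc _ _)).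
Qed.

Lemma fcong_map (A B : Type) (rel : seq A -> seq A -> Prop) (rel' : seq B -> seq B -> Prop)
  (f : A -> B) :
  (forall a b, rel a b -> fcong rel' (map f a) (map f b)) ->
  forall a b, fcong rel a b -> fcong rel' (map f a) (map f b).
Proof.
move=> hb; apply: fcong_F => // a b; rewrite map_cat; exact: fc_refl.
Qed.

Lemma fcong_perm (T : eqType) (rel : seq T -> seq T -> Prop) (a b : seq T) :
  perm_eq a b -> fcong rel a b.
Proof.
elim: a b => [|x a IH] b.
  by rewrite perm_sym => /perm_nilP ->; apply: fc_refl.
move=> hp; have : x \in b by rewrite -(perm_mem hp) mem_head.
move=> /splitPr hs; case: hs hp => b1 b2 hp.
have hp' : perm_eq a (b1 ++ b2).
  by rewrite -(perm_cons x); apply: (perm_trans hp); rewrite -cat1s perm_catCA.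
have -> : x :: a = [:: x] ++ a by [].
apply: fc_trans (fc_cat (fc_refl _ [:: x]) (IH _ hp')) _.
rewrite catA -[b1 ++ x :: b2]/(b1 ++ [:: x] ++ b2) catA.
apply: fc_cat; [exact: fc_swap | exact: fc_refl].
Qed.

Lemma fcong_sum (A : Type) (V : zmodType) (P : V -> Prop) (rel : seq A -> seq A -> Prop)
  (F : A -> V) :
  P 0 -> (forall x y, P x -> P y -> P (x - y)) ->
  (forall a b, rel a b -> P (\sum_(x <- a) F x - \sum_(x <- b) F x)) ->
  forall a b, fcong rel a b -> P (\sum_(x <- a) F x - \sum_(x <- b) F x).
Proof.
move=> P0 PB hb a b; elim => {a b}.
- by move=> a b /hb.
- by move=> a; rewrite subrr; apply: (P0).
- move=> a b _ h; rewrite -opprB -sub0r; exact: (PB).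
- move=> a b c _ h1 _ h2.
  have -> : \sum_(x <- a) F x - \sum_(x <- c) F x =
    (\sum_(x <- a) F x - \sum_(x <- b) F x) - (0 - (\sum_(x <- b) F x - \sum_(x <- c) F x)).
    by rewrite sub0r opprK addrA subrK.
  by apply: (PB) => //; apply: (PB).
- move=> a a' b b' _ h1 _ h2; rewrite !big_cat /=.
  have -> : \sum_(x <- a) F x + \sum_(x <- b) F x - (\sum_(x <- a') F x + \sum_(x <- b') F x) =
    (\sum_(x <- a) F x - \sum_(x <- a') F x) - (0 - (\sum_(x <- b) F x - \sum_(x <- b') F x)).
    by rewrite sub0r opprK opprD !addrA; congr (_ + _); rewrite -!addrA; congr (_ + _); rewrite addrC.
  by apply: (PB) => //; apply: (PB).
- by move=> a b; rewrite !big_cat /= addrC subrr; apply: (P0).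
Qed.

Lemma fcong_map0 (A B : Type) (rel : seq B -> seq B -> Prop) (f : A -> B) :
  (forall x, fcong rel [:: f x] [::]) -> forall P, fcong rel (map f P) [::].
Proof.
move=> h; elim => [|x P IH] /=; first exact: fc_refl.
have -> : f x :: map f P = [:: f x] ++ map f P by [].
by rewrite -[[::]]/([::] ++ [::]); apply: fc_cat.
Qed.

Lemma fcong_map2 (A : Type) (T : eqType) (rel : seq T -> seq T -> Prop) (f g h : A -> T) :
  (forall x, fcong rel [:: f x] [:: g x; h x]) ->
  forall P, fcong rel (map f P) (map g P ++ map h P).
Proof.
move=> hx; elim => [|x P IH] /=; first exact: fc_refl.
have -> : f x :: map f P = [:: f x] ++ map f P by [].
apply: fc_trans (fc_cat (hx x) IH) _; apply: fcong_perm.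
by rewrite /= perm_cons -cat1s perm_catCA.
Qed.

Section Lin.
Variables (k : comPzRingType) (V W : lmodType k) (f : V -> W).
Hypothesis hf : forall (c : k) x y, f (c *: x + y) = c *: f x + f y.
Lemma lin_add x y : f (x + y) = f x + f y.
Proof. by have := hf 1 x y; rewrite !scale1r. Qed.
Lemma lin0 : f 0 = 0.
Proof.
have h := hf 1 0 0; rewrite !scale1r addr0 in h.
by apply: (addrI (f 0)); rewrite addr0 -h.
Qed.
Lemma linN x : f (- x) = - f x.
Proof. by have := hf (-1) x 0; rewrite scaleN1r addr0 lin0 addr0 scaleN1r. Qed.
Lemma linB x y : f (x - y) = f x - f y.
Proof. by rewrite lin_add linN. Qed.
Lemma lin_sum (I : Type) (r : seq I) (F : I -> V) :
  f (\sum_(i <- r) F i) = \sum_(i <- r) f (F i).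
Proof. by elim: r => [|x r IH]; rewrite ?big_nil ?lin0 // !big_cons lin_add IH. Qed.
End Lin.

Section BA.
Variables (k : comPzRingType) (R G : algType k) (s t : R -> G) (D : G -> seq (G * G)) (e : G -> R).
Hypothesis hB : is_left_bialgebroid s t D e.

Lemma s_lin : forall (c : k) x y, s (c *: x + y) = c *: s x + s y.
Proof. by case: hB => -[]. Qed.
Lemma s1 : s 1 = 1. Proof. by case: hB => -[]. Qed.
Lemma sM x y : s (x * y) = s x * s y. Proof. by case: hB => -[]. Qed.
Lemma t_lin : forall (c : k) x y, t (c *: x + y) = c *: t x + t y.
Proof. by case: hB => _ [] []. Qed.
Lemma t1 : t 1 = 1. Proof. by case: hB => _ [] []. Qed.
Lemma st_comm r r' : s r * t r' = t r' * s r. Proof. by case: hB => _ [_ [] ]. Qed.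
Lemma Dbi r r' g : teqG s t (D (s r * t r' * g)) [seq (s r * p.1, t r' * p.2) | p <- D g].
Proof. by case: hB => _ [_ [_ [_ [] ]]]. Qed.
Lemma counit1 g : \sum_(p <- D g) s (e p.1) * p.2 = g.
Proof. by case: hB => _ [_ [_ [_ [_ [_ [] ]]]]]. Qed.
Lemma Dtak g r : teqG s t [seq (p.1 * t r, p.2) | p <- D g] [seq (p.1, p.2 * s r) | p <- D g].
Proof. by case: hB => _ [_ [_ [_ [_ [_ [_ [_ [] ]]]]]]]. Qed.
Lemma Dmul g g' : teqG s t (D (g * g')) [seq (p.1 * q.1, p.2 * q.2) | p <- D g, q <- D g'].
Proof. by case: hB => _ [_ [_ [_ [_ [_ [_ [_ [_ [] ]]]]]]]]. Qed.
Lemma D1 : teqG s t (D 1) [:: (1, 1)].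
Proof. by case: hB => _ [_ [_ [_ [_ [_ [_ [_ [_ [_ [] ]]]]]]]]]. Qed.
Lemma e_lin : forall (c : k) x y, e (c *: x + y) = c *: e x + e y.
Proof. by case: hB => _ [_ [_ [_ [_ [_ [_ [_ [_ [_ [_ [] ]]]]]]]]]]. Qed.
Lemma ebi r r' g : e (s r * t r' * g) = r * e g * r'.
Proof. by case: hB => _ [_ [_ [_ [_ [_ [_ [_ [_ [_ [_ [_ [] ]]]]]]]]]]]. Qed.
Lemma e1 : e 1 = 1.
Proof. by case: hB => _ [_ [_ [_ [_ [_ [_ [_ [_ [_ [_ [_ [_ [] ]]]]]]]]]]]]. Qed.
Lemma econ g g' : e (g * g') = e (g * s (e g')).
Proof. by case: hB => _ [_ [_ [_ [_ [_ [_ [_ [_ [_ [_ [_ [_ [_ h]]]]]]]]]]]]]; case: (h g g'). Qed.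

Lemma e_t r g : e (t r * g) = e g * r.
Proof. by have := ebi 1 r g; rewrite s1 !mul1r. Qed.
Lemma e_s r : e (s r) = r.
Proof. by have := ebi r 1 1; rewrite t1 !mulr1 e1 mulr1. Qed.


Lemma teq_rmul x y a b : teqG s t a b ->
  teqG s t (map (fun p => (p.1 * x, p.2 * y)) a) (map (fun p => (p.1 * x, p.2 * y)) b).
Proof.
rewrite /teqG /tens2_eq; apply: fcong_map => {a b} a b; case => /=.
- move=> m m' n; rewrite mulrDl; apply: fc_base; exact: t2_addl.
- move=> m n n'; rewrite mulrDl; apply: fc_base; exact: t2_addr.
- move=> n; rewrite mul0r; apply: fc_base; exact: t2_zerol.
- move=> m; rewrite mul0r; apply: fc_base; exact: t2_zeror.
- move=> m n m' n' [r [-> ->]]; apply: fc_base; apply: t2_bal; exists r.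
  by rewrite !mulrA.
Qed.

Lemma teq_lmul_s r a b : teqG s t a b ->
  teqG s t (map (fun p => (s r * p.1, p.2)) a) (map (fun p => (s r * p.1, p.2)) b).
Proof.
rewrite /teqG /tens2_eq; apply: fcong_map => {a b} a b; case => /=.
- move=> m m' n; rewrite mulrDr; apply: fc_base; exact: t2_addl.
- move=> m n n'; apply: fc_base; exact: t2_addr.
- move=> n; rewrite mulr0; apply: fc_base; exact: t2_zerol.
- move=> m; apply: fc_base; exact: t2_zeror.
- move=> m n m' n' [r' [-> ->]]; apply: fc_base; apply: t2_bal; exists r'.
  by rewrite !mulrA st_comm.
Qed.

Definition kk (p q : G * G) := (p.1 * q.1, p.2 * q.2).

Lemma tak_sub (P : seq (G * G)) :
  (forall r, teqG s t [seq (p.1 * t r, p.2) | p <- P] [seq (p.1, p.2 * s r) | p <- P]) ->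
  forall Q Q', teqG s t Q Q' -> teqG s t [seq kk p q | p <- P, q <- Q] [seq kk p q | p <- P, q <- Q'].
Proof.
move=> htak; rewrite /teqG /tens2_eq.
have hcat : forall a b, fcong (tens2_rel (balR (fun g r => t r * g) (fun r g => s r * g)))
   [seq kk p q | p <- P, q <- a ++ b]
   ([seq kk p q | p <- P, q <- a] ++ [seq kk p q | p <- P, q <- b]).
  move=> a b; apply: fcong_perm; apply/permPl.
  exact: (perm_allpairs_catr _ _ (fun=> a) (fun=> b)).
apply: fcong_F => // a b hr.
have E1 : forall x, [seq kk p q | p <- P, q <- [:: x]] = [seq kk p x | p <- P].
  by move=> x; rewrite allpairs1r.
case: hr => /=.
- move=> m m' n; apply: fc_trans _ (fc_sym (hcat [:: (m, n)] [:: (m', n)])).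
  rewrite !E1; apply: fcong_map2 => p; rewrite /kk /= mulrDr.
  apply: fc_base; exact: t2_addl.
- move=> m n n'; apply: fc_trans _ (fc_sym (hcat [:: (m, n)] [:: (m, n')])).
  rewrite !E1; apply: fcong_map2 => p; rewrite /kk /= mulrDr.
  apply: fc_base; exact: t2_addr.
- move=> n; rewrite E1 (_ : flatten _ = [::]); last by elim: (P). apply: fcong_map0 => p; rewrite /kk /= mulr0.
  apply: fc_base; exact: t2_zerol.
- move=> m; rewrite E1 (_ : flatten _ = [::]); last by elim: (P). apply: fcong_map0 => p; rewrite /kk /= mulr0.
  apply: fc_base; exact: t2_zeror.
- move=> m n m' n' [r [-> ->]]; rewrite !E1.
  have := teq_rmul m' n (htak r); rewrite -!map_comp /comp /=.
  have -> : [seq kk p (t r * m', n) | p <- P] = [seq (p.1 * t r * m', p.2 * n) | p <- P].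
    by apply: eq_map => p; rewrite /kk /= mulrA.
  have -> : [seq kk p (m', s r * n) | p <- P] = [seq (p.1 * m', p.2 * s r * n) | p <- P].
    by apply: eq_map => p; rewrite /kk /= mulrA.
  by [].
Qed.

Lemma Ds r : teqG s t (D (s r)) [:: (s r, 1)].
Proof.
have h := Dbi r 1 1; rewrite t1 !mulr1 in h; apply: fc_trans h _.
have -> : [seq (s r * p.1, 1 * p.2) | p <- D 1] = [seq (s r * p.1, p.2) | p <- D 1].
  by apply: eq_map => p; rewrite mul1r.
by have := teq_lmul_s r D1; rewrite /= mulr1.
Qed.

Lemma Dsr g r : teqG s t (D (g * s r)) [seq (p.1 * s r, p.2) | p <- D g].
Proof.
apply: fc_trans (Dmul g (s r)) _.
apply: fc_trans (tak_sub (Dtak g) (Ds r)) _.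
rewrite allpairs1r.
have -> : [seq kk p (s r, 1) | p <- D g] = [seq (p.1 * s r, p.2) | p <- D g].
  by apply: eq_map => p; rewrite /kk /= mulr1.
exact: fc_refl.
Qed.

Lemma E_resp a b : teqG s t a b ->
  \sum_(p <- a) s (e p.1) * p.2 = \sum_(p <- b) s (e p.1) * p.2.
Proof.
move=> h; apply/subr0_eq; move: h; rewrite /teqG /tens2_eq.
apply: (@fcong_sum _ _ (fun z => z = 0) _ (fun p => s (e p.1) * p.2)) => //.
  by move=> x y -> ->; rewrite subrr.
move=> {}a {}b; case => [m m' n|m n n'|n|m|m n m' n' [r [-> ->]]];
  rewrite ?big_cons ?big_nil /=.
- by rewrite (lin_add e_lin) (lin_add s_lin) mulrDl !addr0 subrr.
- by rewrite mulrDr !addr0 subrr.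
- by rewrite (lin0 e_lin) (lin0 s_lin) mul0r !addr0 subrr.
- by rewrite mulr0 !addr0 subrr.
- by rewrite e_t sM !mulrA !addr0 subrr.
Qed.

End BA.

Section Main.
Variables (k : comPzRingType) (R G H : algType k).
Variables (sG tG : R -> G) (DG : G -> seq (G * G)) (eG : G -> R).
Variables (sH tH : R -> H) (DH : H -> seq (H * H)) (eH : H -> R).
Variable (pi : G -> H).
Hypothesis hGb : is_left_bialgebroid sG tG DG eG.
Hypothesis hHb : is_left_bialgebroid sH tH DH eH.
Hypothesis hpi : is_bialgebroid_surjection sG tG DG eG sH tH DH eH pi.

Lemma pi_lin : forall (c : k) x y, pi (c *: x + y) = c *: pi x + pi y.
Proof. by case: hpi. Qed.
Lemma pi1 : pi 1 = 1. Proof. by case: hpi => _ []. Qed.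
Lemma piM x y : pi (x * y) = pi x * pi y. Proof. by case: hpi => _ [_ []]. Qed.
Lemma pi_s r : pi (sG r) = sH r. Proof. by case: hpi => _ [_ [_ [_ []]]]. Qed.
Lemma pi_t r : pi (tG r) = tH r. Proof. by case: hpi => _ [_ [_ [_ [_ []]]]]. Qed.

Lemma teq_pi a b : teqG sG tG a b ->
  teqGH tG sH (map (fun p => (p.1, pi p.2)) a) (map (fun p => (p.1, pi p.2)) b).
Proof.
rewrite /teqG /teqGH /tens2_eq; apply: fcong_map => {a b} a b; case => /=.
- move=> m m' n; apply: fc_base; exact: t2_addl.
- move=> m n n'; rewrite (lin_add pi_lin); apply: fc_base; exact: t2_addr.
- move=> n; apply: fc_base; exact: t2_zerol.
- move=> m; rewrite (lin0 pi_lin); apply: fc_base; exact: t2_zeror.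
- move=> m n m' n' [r [-> ->]]; rewrite piM pi_s; apply: fc_base; apply: t2_bal.
  by exists r.
Qed.

Lemma teqGH_rmul (x : G) (y : H) a b : teqGH tG sH a b ->
  teqGH tG sH (map (fun p => (p.1 * x, p.2 * y)) a) (map (fun p => (p.1 * x, p.2 * y)) b).
Proof.
rewrite /teqGH /tens2_eq; apply: fcong_map => {a b} a b; case => /=.
- move=> m m' n; rewrite mulrDl; apply: fc_base; exact: t2_addl.
- move=> m n n'; rewrite mulrDl; apply: fc_base; exact: t2_addr.
- move=> n; rewrite mul0r; apply: fc_base; exact: t2_zerol.
- move=> m; rewrite mul0r; apply: fc_base; exact: t2_zeror.
- move=> m n m' n' [r [-> ->]]; apply: fc_base; apply: t2_bal; exists r.
  by rewrite !mulrA.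
Qed.

Lemma teqGH_scale (c : k) a b : teqGH tG sH a b ->
  teqGH tG sH (map (fun p => (c *: p.1, p.2)) a) (map (fun p => (c *: p.1, p.2)) b).
Proof.
rewrite /teqGH /tens2_eq; apply: fcong_map => {a b} a b; case => /=.
- move=> m m' n; rewrite scalerDr; apply: fc_base; exact: t2_addl.
- move=> m n n'; apply: fc_base; exact: t2_addr.
- move=> n; rewrite scaler0; apply: fc_base; exact: t2_zerol.
- move=> m; apply: fc_base; exact: t2_zeror.
- move=> m n m' n' [r [-> ->]]; apply: fc_base; apply: t2_bal; exists r.
  by rewrite scalerAr.
Qed.

Lemma EH_resp a b : teqGH tG sH a b ->
  \sum_(p <- a) sH (eG p.1) * p.2 = \sum_(p <- b) sH (eG p.1) * p.2.
Proof.
move=> h; apply/subr0_eq; move: h; rewrite /teqGH /tens2_eq.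
apply: (@fcong_sum _ _ (fun z => z = 0) _ (fun p => sH (eG p.1) * p.2)) => //.
  by move=> x y -> ->; rewrite subrr.
move=> {}a {}b; case => [m m' n|m n n'|n|m|m n m' n' [r [-> ->]]];
  rewrite ?big_cons ?big_nil /=.
- by rewrite (lin_add (e_lin hGb)) (lin_add (s_lin hHb)) mulrDl !addr0 subrr.
- by rewrite mulrDr !addr0 subrr.
- by rewrite (lin0 (e_lin hGb)) (lin0 (s_lin hHb)) mul0r !addr0 subrr.
- by rewrite mulr0 !addr0 subrr.
- by rewrite (e_t hGb) (sM hHb) !mulrA !addr0 subrr.
Qed.

Local Notation hk := (hopf_kernel tG DG sH pi).
Local Notation gbp := (in_GBplus tG DG eG sH pi).

Lemma hk_pi0 b : hk b -> eG b = 0 -> pi b = 0.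
Proof.
move=> hb he; have := EH_resp hb.
rewrite big_cons big_nil /= he (lin0 (s_lin hHb)) mul0r addr0 big_map => <-.
rewrite -{1}(counit1 hGb b) (lin_sum pi_lin); apply: eq_bigr => p _.
by rewrite piM pi_s.
Qed.

Lemma hk_sub x y : hk x -> hk y -> hk (x - y).
Proof.
move=> hx hy; have Dl : forall (c : k) x y, teqG sG tG (DG (c *: x + y))
      ([seq (c *: p.1, p.2) | p <- DG x] ++ DG y).
  by case: hGb => _ [_ [_ []]].
have -> : x - y = (-1) *: y + x by rewrite scaleN1r addrC.
rewrite /hopf_kernel; apply: fc_trans (teq_pi (Dl (-1) y x)) _.
rewrite map_cat.
have -> : [seq (p.1, pi p.2) | p <- [seq (-1 *: p.1, p.2) | p <- DG y]] =
   [seq (-1 *: p.1, p.2) | p <- [seq (p.1, pi p.2) | p <- DG y]].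
  by rewrite -!map_comp; apply: eq_map.
apply: fc_trans (fc_cat (teqGH_scale (-1) hy) hx) _ => /=.
apply: fc_sym; apply: fc_base; exact: t2_addl.
Qed.

Lemma hk_s r : hk (sG r).
Proof. by have := teq_pi (Ds hGb r); rewrite /= pi1. Qed.

Lemma hk_rs b r : hk b -> hk (b * sG r).
Proof.
move=> hb; rewrite /hopf_kernel.
apply: fc_trans (teq_pi (Dsr hGb b r)) _.
have h := teqGH_rmul (sG r) 1 hb; rewrite /= mulr1 -map_comp in h.
rewrite -map_comp.
have -> : [seq ((fun p => (p.1, pi p.2)) \o (fun p => (p.1 * sG r, p.2))) p | p <- DG b] =
  [seq ((fun p => (p.1 * sG r, p.2 * 1)) \o (fun p => (p.1, pi p.2))) p | p <- DG b].
  by apply: eq_map => p /=; rewrite mulr1.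
exact: h.
Qed.

Lemma gbp0 : gbp 0.
Proof. by exists [::]; split => //; rewrite big_nil. Qed.

Lemma gbpB x y : gbp x -> gbp y -> gbp (x - y).
Proof.
move=> [gs [h1 ->]] [gs' [h2 ->]].
exists (gs ++ map (fun p => (- p.1, p.2)) gs'); split.
  move=> p; rewrite mem_cat => /orP [/h1 //|/mapP [q /h2 hq ->]] //.
by rewrite big_cat big_map /= -sumrN; congr (_ + _); apply: eq_bigr => p _; rewrite mulNr.
Qed.

Lemma gbp_pi x : gbp x -> pi x = 0.
Proof.
move=> [gs [h ->]]; rewrite (lin_sum pi_lin) big_seq big1 // => p /h [hb he].
by rewrite piM (hk_pi0 hb he) mulr0.
Qed.


Lemma galois_case :
  (forall w, exists u, teqG sG tG (right_hopf_map DG u) w) ->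
  is_hopf_galois tG DG sH pi -> forall x, pi x = 0 -> gbp x.
Proof.
move=> hsurj hgal x hx.
case: (hsurj [:: (1, x)]) => u hu.
have E : galois_map DG pi u = map (fun p => (p.1, pi p.2)) (right_hopf_map DG u).
  rewrite /galois_map /right_hopf_map.
  by elim: u {hu} => //= q u IH; rewrite map_cat IH -map_comp.
have h0 : teqGH tG sH (galois_map DG pi u) (galois_map DG pi [::]).
  rewrite E /=; apply: fc_trans (teq_pi hu) _ => /=; rewrite hx.
  apply: fc_base; exact: t2_zeror.
have hB := (hgal.1 u [::]).1 h0.
have := @fcong_sum _ _ gbp _ (fun q => q.1 * sG (eG q.2)) gbp0 gbpB _ u [::] hB.
rewrite big_nil subr0.
have -> : \sum_(q <- u) q.1 * sG (eG q.2) = x.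
  have := E_resp hGb hu; rewrite big_cons big_nil /= (e1 hGb) (s1 hGb) mul1r addr0 => <-.
  rewrite /right_hopf_map big_flatten /= big_map; apply: eq_bigr => q _.
  rewrite big_map /=.
  under eq_bigr do rewrite (econ hGb).
  rewrite -(counit1 hGb (q.1 * sG (eG q.2))) (E_resp hGb (Dsr hGb q.1 (eG q.2))).
  by rewrite big_map.
apply.
move=> a b; case => [m m' n|m n n'|n|m|m n m' n' [c [hc [-> ->]]]];
  rewrite ?big_cons ?big_nil /=.
- by rewrite mulrDl !addr0 subrr; apply: gbp0.
- by rewrite (lin_add (e_lin hGb)) (lin_add (s_lin hGb)) mulrDr !addr0 subrr; apply: gbp0.
- by rewrite mul0r !addr0 subrr; apply: gbp0.
- by rewrite (lin0 (e_lin hGb)) (lin0 (s_lin hGb)) mulr0 !addr0 subrr; apply: gbp0.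
- rewrite (econ hGb c) !addr0.
  set r := eG n.
  pose d := c * sG r - sG (eG (c * sG r)).
  exists [:: (m', d)]; split.
    move=> p; rewrite inE => /eqP -> /=; split.
      exact: hk_sub (hk_rs _ hc) (hk_s _).
    by rewrite /d (linB (e_lin hGb)) (e_s hGb) subrr.
  by rewrite big_cons big_nil addr0 /= /d mulrBr !mulrA.
Qed.

End Main.

Unset Implicit Arguments.

Theorem corollary4p12 (k : comPzRingType) (R G H : algType k)
  (sG tG : R -> G) (DG : G -> seq (G * G)) (eG : G -> R)
  (sH tH : R -> H) (DH : H -> seq (H * H)) (eH : H -> R)
  (pi : G -> H) :
  is_right_hopf_algebroid sG tG DG eG ->
  is_right_hopf_algebroid sH tH DH eH ->
  is_bialgebroid_surjection sG tG DG eG sH tH DH eH pi ->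
  flat_G_tri tG ->
  ((forall x, pi x = 0 <-> in_GBplus tG DG eG sH pi x) \/
   is_hopf_galois tG DG sH pi) ->
  exists phi : G -> H, Gbar_iso_H sG tG DG eG sH tH DH eH pi phi.
Proof.
move=> [hGb [_ hGs]] [hHb _] hpi _ hcase.
exists pi; split; first exact: pi_lin hpi.
split; first by move=> x hx; exact: (gbp_pi hGb hHb hpi hx).
split.
  move=> x y hxy.
  have hx : pi (x - y) = 0 by rewrite (linB (pi_lin hpi)) hxy subrr.
  case: hcase => [h|hgal]; first by apply/h.
  exact: (galois_case hGb hpi hGs hgal hx).
split; first by case: hpi => _ [_ [_ []]].
split; first by move=> g x; exact: (piM hpi).
split; first by move=> r r' x; rewrite !(piM hpi) (pi_s hpi) (pi_t hpi).
by case: hpi => _ [_ [_ [_ [_ [_ [hD he]]]]]].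
Qed.
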